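(* Let $(M,d)$ be a complete separable geodesic space and $m\in\mathcal P_2(M)$ such that (A1) and (A2) hold. Assume there exist constants $p,r_0>0$ and a function $c:M\to\mathbb R_+$ such that $m(B(x,r))>c(x)r^p$ for all $x\in M$ and all $r\in(0,r_0]$. Assume there exist $\beta,L>0$ such that every loss $\ell_t$ is measurable, geodesically $\beta$-expconcave and $L$-Lipschitz, and that the \textsc{ewb} forecaster with $\beta_t=\beta$ is well defined (normalizing integrals finite and positive, $m_t\in\mathcal P_2(M)$). Let $n\ge 1/r_0$ and suppose $x_n^*\in\arg\min_{x\in M}\sum_{t=1}^n\ell_t(x)$ exists. Then \[R_n\le L+\frac1\beta\ln\frac{1}{c(x_n^* )}+\frac{p\ln n}{\beta}.\]
   Context: A geodesic is a path $\gamma:[0,1]\to M$ with $d(\gamma(s),\gamma(t))=|t-s|\,d(\gamma(0),\gamma(1))$. $f$ is geodesically convex if $t\mapsto f(\gamma(t))$ is convex for every geodesic $\gamma$; geodesically concave if $-f$ is; geodesically $\beta$-expconcave if $e^{-\beta f}$ is geodesically concave. $B(x,r)=\{y:d(x,y)<r\}$. $\mathcal P_2(M)$: Borel probability measures $\mu$ with $\int d^2(x,y)\mu(\mathrm dy)<\infty$ for all $x$; a barycenter of $\mu$ is a minimizer of $x\mapsto\int d^2(x,y)\mu(\mathrm dy)$. (A1): every $\mu\in\mathcal P_2(M)$ has a barycenter. (A2): for every $\mu\in\mathcal P_2(M)$, barycenter $x^*$ of $\mu$ and geodesically convex $f:M\to\mathbb R$ either positive or in $L^1(\mu)$, $f(x^*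 )\le\int f\,\mathrm d\mu$. Online protocol: at round $t$ the player picks $x_t$, then loss $\ell_t:M\to\mathbb R$ is revealed (arbitrary). Regret $R_n=\sum_{t=1}^n\ell_t(x_t)-\min_x\sum_{t=1}^n\ell_t(x)$. \textsc{ewb} forecaster: $m_1=m$, $\mathrm dm_{t+1}=e^{-\beta\ell_t}\mathrm dm_t/\int e^{-\beta\ell_t}\mathrm dm_t$, $x_t$ a barycenter of $m_t$. *)

(* Defs.v *)
From HB Require Import structures.
From mathcomp Require Import all_boot all_order all_algebra.
From mathcomp Require Import all_classical all_reals all_analysis.
Set Implicit Arguments. Unset Strict Implicit. Unset Printing Implicit Defensive.
Import Order.TTheory GRing.Theory Num.Theory.
Import numFieldNormedType.Exports.
Local Open Scope classical_set_scope.
Local Open Scope ring_scope.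

Section MetricDefs.
Context {R : realType} {M : Type} (d : M -> M -> R).

Definition is_metric : Prop :=
  [/\ forall x y, 0 <= d x y,
      forall x y, d x y = 0 <-> x = y,
      forall x y, d x y = d y x &
      forall x y z, d x z <= d x y + d y z].

Definition dball (x : M) (r : R) : set M := [set y | d x y < r].

Definition dopen (A : set M) : Prop :=
  forall x, A x -> exists2 e : R, 0 < e & dball x e `<=` A.

Definition dcomplete : Prop :=
  forall u : nat -> M,
    (forall e : R, 0 < e -> exists N, forall i j, (N <= i)%N -> (N <= j)%N -> d (u i) (u j) < e) ->
    exists l, forall e : R, 0 < e -> exists N, forall i, (N <= i)%N -> d (u i) l < e.

Definition dseparable : Prop :=
  exists u : nat -> M, forall x (e : R), 0 < e -> exists k, d x (u k) < e.

Definition geodesic (g : R -> M) : Prop :=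
  forall s t, 0 <= s <= 1 -> 0 <= t <= 1 -> d (g s) (g t) = `|t - s| * d (g 0) (g 1).

Definition geodesic_space : Prop :=
  forall x y, exists g, geodesic g /\ g 0 = x /\ g 1 = y.

Definition geod_convex (f : M -> R) : Prop :=
  forall g, geodesic g -> forall s t l, 0 <= s <= 1 -> 0 <= t <= 1 -> 0 <= l <= 1 ->
    f (g ((1 - l) * s + l * t)) <= (1 - l) * f (g s) + l * f (g t).

Definition geod_concave (f : M -> R) : Prop := geod_convex (fun x => - f x).

Definition geod_expconcave (beta : R) (f : M -> R) : Prop :=
  geod_concave (fun x => expR (- (beta * f x))).

Definition dlipschitz (L : R) (f : M -> R) : Prop :=
  forall x y, `|f x - f y| <= L * d x y.
End MetricDefs.

Section MeasDefs.
Context {R : realType} {dsp : measure_display} {M : measurableType dsp}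
  (d : M -> M -> R).
Local Open Scope ereal_scope.

Definition borel_of_metric : Prop :=
  (@measurable _ M) = <<s dopen d >>.

Definition P2 (mu : probability M R) : Prop :=
  forall x, mu.-integrable setT (fun y => ((d x y) ^+ 2)%:E).

Definition barycenter (mu : probability M R) (x : M) : Prop :=
  forall z, \int[mu]_y ((d x y) ^+ 2)%:E <= \int[mu]_y ((d z y) ^+ 2)%:E.

Definition A1 : Prop :=
  forall mu : probability M R, P2 mu -> exists x, barycenter mu x.

Definition A2 : Prop :=
  forall (mu : probability M R) (xs : M) (f : M -> R),
    P2 mu -> barycenter mu xs -> geod_convex d f ->
    (((forall x, (0 <= f x)%R) /\ measurable_fun setT f)
       \/ mu.-integrable setT (fun x => (f x)%:E)) ->
    (f xs)%:E <= \int[mu]_x (f x)%:E.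

(* EWB forecaster with constant beta, rounds indexed 1,2,...:
   mt 1 = m, d mt(t+1) = e^{-beta l_t} d mt(t) / Z_t, with 0 < Z_t < +oo,
   each mt t in P_2, and x t a barycenter of mt t. *)
Definition ewb_weight (beta : R) (l : M -> R) (y : M) : \bar R :=
  (expR (- (beta * l y)))%:E.

Definition ewb (m : probability M R) (beta : R) (l : nat -> M -> R)
    (mt : nat -> probability M R) (x : nat -> M) : Prop :=
  [/\ mt 1%N = m,
      forall t, (1 <= t)%N ->
        0 < \int[mt t]_y ewb_weight beta (l t) y < +oo,
      forall t, (1 <= t)%N -> forall A, measurable A ->
        mt t.+1 A * \int[mt t]_y ewb_weight beta (l t) y
          = \int[mt t]_(y in A) ewb_weight beta (l t) y,
      forall t, (1 <= t)%N -> P2 (mt t) &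
      forall t, (1 <= t)%N -> barycenter (mt t) (x t)].
End MeasDefs.

(* Main.v *)
Require Import Defs.
From HB Require Import structures.
From mathcomp Require Import all_boot all_order all_algebra.
From mathcomp Require Import all_classical all_reals all_analysis.
From mathcomp Require Import ring lra measurable_realfun.
Import Order.TTheory GRing.Theory Num.Theory.
Import numFieldNormedType.Exports.
Local Open Scope classical_set_scope.
Local Open Scope ring_scope.

Lemma mw (R : realType) (dsp : measure_display) (M : measurableType dsp) (f : M -> R) (b : R) :
  measurable_fun setT f -> measurable_fun setT (fun y => expR (- (b * f y))).
Proof.
move=> mf. apply: measurableT_comp; first exact: measurable_realfun.measurable_expR.
apply: measurableT_comp; first exact: measurable_realfun.oppr_measurable.
apply: measurableT_comp; first exact: measurable_realfun.mulrl_measurable. exact: mf.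
Qed.

Lemma chain (R : realType) (P Z A : nat -> R) :
  (forall k, (1 <= k)%N -> 0 < Z k) -> (forall k, (1 <= k)%N -> 0 < A k) ->
  0 < P 1%N -> (forall k, (1 <= k)%N -> A k * P k <= P k.+1 * Z k) ->
  forall k, (1 <= k)%N -> 0 < P k /\
   \sum_(1 <= t < k) ln (A t) + ln (P 1%N) <= ln (P k) + \sum_(1 <= t < k) ln (Z t).
Proof.
move=> hZ hA hP1 hs; elim=> // k IH _.
case: k IH => [|k] IH.
  by rewrite !big_geq // add0r addr0.
have [Pk ih] := IH isT.
have Zk := hZ k.+1 isT; have Ak := hA k.+1 isT.
have hk := hs k.+1 isT.
have APk : 0 < A k.+1 * P k.+1 by rewrite mulr_gt0.
have Pk1 : 0 < P k.+2.
  rewrite ltNge; apply/negP => h.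
  have : P k.+2 * Z k.+1 <= 0 by rewrite mulr_le0_ge0 // ltW.
  move=> h2; have := lt_le_trans APk hk; lra.
split => //.
rewrite big_nat_recr //= [\sum_(1 <= t < k.+2) _]big_nat_recr //=.
have : ln (A k.+1 * P k.+1) <= ln (P k.+2 * Z k.+1).
  by rewrite ler_ln ?posrE ?mulr_gt0.
rewrite !lnM ?posrE //. lra.
Qed.

Lemma probfin (R : realType) (dsp : measure_display) (M : measurableType dsp)
  (mu : probability M R) (A : set M) : measurable A ->
  mu A = (fine (mu A))%:E /\ 0 <= fine (mu A) <= 1.
Proof.
move=> mA.
have h0 : (0 <= mu A)%E := measure_ge0 _ _.
have h1 : (mu A <= 1)%E := probability_le1 _ mA.
have fA : mu A \is a fin_num.
  by rewrite ge0_fin_numE // (le_lt_trans h1) // ltry.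
split; first by rewrite fineK.
by rewrite fine_ge0 //= -lee_fin fineK.
Qed.

Theorem mainTheorem4 (R : realType) (dsp : measure_display) (M : measurableType dsp)
  (d : M -> M -> R) (m : probability M R)
  (p r0 : R) (c : M -> R) (beta L : R)
  (l : nat -> M -> R) (mt : nat -> probability M R) (x : nat -> M)
  (n : nat) (xs : M) :
  is_metric d -> dcomplete d -> dseparable d -> geodesic_space d ->
  borel_of_metric d ->
  P2 d m -> A1 d -> A2 d ->
  0 < p -> 0 < r0 -> (forall y, 0 < c y) ->
  (forall y r, 0 < r <= r0 -> (((c y) * r `^ p)%:E < m (dball d y r))%E) ->
  0 < beta -> 0 < L ->
  (forall t, (1 <= t)%N ->
     measurable_fun setT (l t) /\ geod_expconcave d beta (l t) /\ dlipschitz d L (l t)) ->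
  ewb d m beta l mt x ->
  r0^-1 <= n%:R ->
  (forall y, \sum_(1 <= t < n.+1) l t xs <= \sum_(1 <= t < n.+1) l t y) ->
  \sum_(1 <= t < n.+1) l t (x t) - \sum_(1 <= t < n.+1) l t xs
    <= L + beta^-1 * ln ((c xs)^-1) + p * ln n%:R / beta.
Proof.
move=> hmet _ _ _ hB _ _ hA2 p0 r00 c0 hball b0 L0 hl [e1 e2 e3 e4 e5] hn _.
have n0 : 0 < n%:R :> R by apply: lt_le_trans hn; rewrite invr_gt0.
set r : R := n%:R^-1.
have r0' : 0 < r by rewrite invr_gt0.
have rr0 : r <= r0.
  by rewrite /r -[X in _ <= X](invrK r0) lef_pV2 ?posrE ?invr_gt0.
have [d0 _ _ dtri] := hmet.
set B := dball d xs r.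
have mB : measurable B.
  rewrite /borel_of_metric in hB; rewrite hB; apply: sub_sigma_algebra.
  move=> y /= hy; exists (r - d xs y); first by rewrite subr_gt0.
  move=> z /= hz; rewrite /dball /=.
  move: hy hz; rewrite /B /dball /= => hy hz.
  have := dtri xs y z; lra.
set w := fun t y => expR (- (beta * l t y)).
set Z := fun t => fine (\int[mt t]_y ewb_weight beta (l t) y)%E.
have hZ : forall t, (1 <= t)%N -> 0 < Z t /\ (Z t)%:E = (\int[mt t]_y ewb_weight beta (l t) y)%E.
  move=> t t1; have [h1 h2] := andP (e2 t t1).
  have fn : (\int[mt t]_y ewb_weight beta (l t) y)%E \is a fin_num.
    by rewrite ge0_fin_numE // ltW.
  split; last by rewrite fineK.
  by rewrite -lte_fin fineK.
have hJ : forall t, (1 <= t)%N -> Z t <= w t (x t).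
  move=> t t1; have [Zp Ze] := hZ t t1.
  have [ml [ec _]] := hl t t1.
  have hmeas : measurable_fun setT ((fun y => (- w t y)%:E) : M -> \bar R).
    apply/measurable_EFinP; apply: measurableT_comp.
      exact: measurable_realfun.oppr_measurable.
    exact: mw.
  have hint : (mt t).-integrable setT (fun y => (- w t y)%:E).
    apply/integrableP; split => //.
    under eq_integral do rewrite EFinN abseN gee0_abs ?lee_fin ?expR_ge0 //.
    by move: (e2 t t1) => /andP[_].
  have := hA2 (mt t) (x t) (fun y => - w t y) (e4 t t1) (e5 t t1) ec (or_intror hint).
  rewrite EFinN; under eq_integral do rewrite EFinN.
  rewrite integral_ge0N; last by move=> *; rewrite lee_fin expR_ge0.
  have -> : (\int[mt t]_y (w t y)%:E)%E = (Z t)%:E by rewrite Ze.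
  by rewrite leeN2 lee_fin.
have Zpos : forall t, (1 <= t)%N -> 0 < Z t by move=> t t1; have [] := hZ t t1.
set P := fun k => fine (mt k B).
set a := fun t => expR (- (beta * (l t xs + L * r))).
have apos : forall t, (1 <= t)%N -> 0 < a t by move=> *; exact: expR_gt0.
have hstep : forall k, (1 <= k)%N -> a k * P k <= P k.+1 * Z k.
  move=> k k1; have [Zp Ze] := hZ k k1.
  have [Pe _] := @probfin _ _ _ (mt k) B mB; have [Pe1 _] := @probfin _ _ _ (mt k.+1) B mB.
  have := e3 k k1 B mB; rewrite -Ze Pe1 -EFinM => eq.
  rewrite -lee_fin /P eq EFinM -Pe -integral_cst //.
  have [ml [_ lip]] := hl k k1.
  apply: ge0_le_integral => //.
  - by move=> *; rewrite lee_fin ltW // expR_gt0.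
  - apply: (measurable_funS measurableT) => //.
    by apply/measurable_EFinP; exact: mw.
  - move=> y hy; rewrite /ewb_weight /= lee_fin ler_expR lerN2 ler_pM2l //.
    move: hy; rewrite /B /dball /= => hy.
    have := lip xs y; rewrite ler_norml => /andP[h1 h2].
    have := ler_wpM2l (ltW L0) (ltW hy); lra.
have P1pos : 0 < P 1%N.
  have [Pe _] := @probfin _ _ _ (mt 1%N) B mB.
  have := hball xs r; rewrite r0' rr0 /= => /(_ isT).
  rewrite -e1 Pe lte_fin => h; apply: lt_trans h.
  by rewrite mulr_gt0 ?powR_gt0.
have [Pn hc] := @chain _ P Z a Zpos apos P1pos hstep n.+1 isT.
have Pn1 : ln (P n.+1) <= 0.
  have [_ /andP[_ h]] := @probfin _ _ _ (mt n.+1) B mB; exact: ln_le0.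
have h1 : \sum_(1 <= t < n.+1) ln (Z t) <= \sum_(1 <= t < n.+1) (- (beta * l t (x t))).
  apply: ler_sum_nat => t /andP[t1 _].
  have hj := hJ t t1; have zp := Zpos t t1.
  by rewrite -[X in _ <= X]expRK ler_ln ?posrE ?expR_gt0.
have h2 : \sum_(1 <= t < n.+1) ln (a t)
    = - (beta * \sum_(1 <= t < n.+1) l t xs) - beta * L.
  rewrite /a; under eq_bigr do rewrite expRK mulrDr opprD.
  rewrite big_split /= sumr_const_nat subn1 /= sumrN mulr_sumr.
  congr (_ + _); rewrite mulNrn; congr (- _); rewrite -mulr_natr -!mulrA /r mulVf ?mulr1 //.
  by rewrite gt_eqF.
have h3 : ln (c xs) - p * ln n%:R < ln (P 1%N).
  have [Pe _] := @probfin _ _ _ (mt 1%N) B mB.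
  have := hball xs r; rewrite r0' rr0 /= => /(_ isT).
  rewrite -e1 Pe lte_fin => h.
  have cp : 0 < c xs * r `^ p by rewrite mulr_gt0 ?powR_gt0.
  rewrite -ltr_ln ?posrE // in h.
  by rewrite lnM ?posrE ?powR_gt0 // ln_powR /r lnV ?posrE // mulrN in h.
rewrite lnV ?posrE //.
set SX := \sum_(1 <= t < n.+1) l t (x t).
set SS := \sum_(1 <= t < n.+1) l t xs.
have hX : \sum_(1 <= t < n.+1) (- (beta * l t (x t))) = - (beta * SX).
  by rewrite sumrN mulr_sumr.
rewrite hX in h1; rewrite h2 -/SS in hc.
have key : beta * (SX - SS) <= beta * L - ln (c xs) + p * ln n%:R.
rewrite mulrBr; lra.
have -> : L + beta^-1 * - ln (c xs) + p * ln n%:R / beta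
   = beta^-1 * (beta * L - ln (c xs) + p * ln n%:R).
  by field; rewrite gt_eqF.
rewrite -[SX - SS](mulKf (x:=beta)) ?gt_eqF //.
by rewrite ler_pM2l ?invr_gt0.
Qed.
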